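(* Let $X$ be convex and let $f$ be $\alpha$-robustly quasiconvex for some $\alpha>0$, with $X\subset\operatorname{dom}f$. If $X^\infty\cap\mathcal{K}_q(f)=\{0\}$, then the optimal value function $\mu$ is continuous at $0$.
   Context: Standing assumptions: $f:\mathbb{R}^n\to\mathbb{R}\cup\{\pm\infty\}$ is proper (never $-\infty$ and finite at some point) and lower semicontinuous; $X\subset\mathbb{R}^n$ is a nonempty closed set with $\operatorname{dom}f\cap X$ unbounded. $f$ is $\alpha$-robustly quasiconvex ($\alpha\ge0$) if $x\mapsto f(x)+\langle u,x\rangle$ is quasiconvex for every $u$ in the open ball $\mathbb{B}_\alpha$ of radius $\alpha$ about $0$ (quasiconvex: $g(\lambda x+(1-\lambda)y)\le\max\{g(x),g(y)\}$ for $x,y\in\operatorname{dom}g$, $\lambda\in[0,1]$). $X^\infty=\{u:\exists t_k\to+\infty,\ \exists x_k\in X,\ x_k/t_k\to u\}$. $f^\infty_q(u)=\sup_{x\in\operatorname{dom}f}\sup_{t>0}\frac{f(x+tu)-f(x)}{t}$, $\mathcal{K}_q(f)=\{d: f^\infty_q(d)\le0\}$. $f_u(x)=f(x)-\langle u,x\rangle$ and $\mu(u)=\inf_{x\in X}f_u(x)$; continuity of $\mu$ at $0$ means $\lim_{u\to0}\mu(u)=\mu(0)$. *)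

(* Defs.v *)
From HB Require Import structures.
From mathcomp Require Import all_boot all_order all_algebra.
From mathcomp Require Import all_classical all_reals all_analysis.
Set Implicit Arguments. Unset Strict Implicit. Unset Printing Implicit Defensive.
Import Order.TTheory GRing.Theory Num.Theory.
Import numFieldNormedType.Exports.
Local Open Scope classical_set_scope.
Local Open Scope ring_scope.

(* Vectors of R^n are row vectors 'rV[R]_n (with the library's product topology). *)
Definition inner {R : realType} {n : nat} (u x : 'rV[R]_n) : R :=
  \sum_(i < n) u 0 i * x 0 i.

Definition enorm {R : realType} {n : nat} (u : 'rV[R]_n) : R :=
  Num.sqrt (inner u u).

Definition dom {R : realType} {n : nat} (f : 'rV[R]_n -> \bar R) : set 'rV[R]_n :=
  [set x | (f x < +oo)%E].

Definition proper_fun {R : realType} {n : nat} (f : 'rV[R]_n -> \bar R) : Prop :=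
  (forall x, f x <> -oo%E) /\ (exists x, f x \is a fin_num).

Definition lsc {R : realType} {n : nat} (f : 'rV[R]_n -> \bar R) : Prop :=
  forall x (a : R), (a%:E < f x)%E -> \forall y \near x, (a%:E < f y)%E.

Definition convex_set_ {R : realType} {n : nat} (X : set 'rV[R]_n) : Prop :=
  forall x y (l : R), X x -> X y -> 0 <= l <= 1 -> X (l *: x + (1 - l) *: y).

Definition quasiconvex {R : realType} {n : nat} (g : 'rV[R]_n -> \bar R) : Prop :=
  forall x y (l : R), dom g x -> dom g y -> 0 <= l <= 1 ->
    (g (l *: x + (1 - l) *: y)%R <= maxe (g x) (g y))%E.

Definition robustly_quasiconvex {R : realType} {n : nat} (alpha : R)
    (f : 'rV[R]_n -> \bar R) : Prop :=
  forall u : 'rV[R]_n, enorm u < alpha ->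
    quasiconvex (fun x => (f x + (inner u x)%:E)%E).

Definition asymp_cone {R : realType} {n : nat} (X : set 'rV[R]_n) : set 'rV[R]_n :=
  [set u | exists (t : nat -> R) (x : nat -> 'rV[R]_n),
     t @ \oo --> +oo /\ (forall k, X (x k)) /\
     (fun k => (t k)^-1 *: x k) @ \oo --> u].

Definition q_asymp {R : realType} {n : nat} (f : 'rV[R]_n -> \bar R) (u : 'rV[R]_n)
  : \bar R :=
  ereal_sup [set ((f (x + t *: u)%R - f x) * (t^-1)%:E)%E
            | x in dom f & t in [set t : R | 0 < t]] .

Definition Kq {R : realType} {n : nat} (f : 'rV[R]_n -> \bar R) : set 'rV[R]_n :=
  [set d | (q_asymp f d <= 0)%E].

Definition mu {R : realType} {n : nat} (f : 'rV[R]_n -> \bar R) (X : set 'rV[R]_n)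
  (u : 'rV[R]_n) : \bar R :=
  ereal_inf [set (f x - (inner u x)%:E)%E | x in X].

Definition unbounded {R : realType} {n : nat} (A : set 'rV[R]_n) : Prop :=
  forall M : R, exists x, A x /\ M < enorm x.

(* Main.v *)
Require Import Defs.
From HB Require Import structures.
From mathcomp Require Import all_boot all_order all_algebra.
From mathcomp Require Import all_classical all_reals all_analysis.
Import Order.TTheory GRing.Theory Num.Theory.
Import numFieldNormedType.Exports.
Local Open Scope classical_set_scope.
Local Open Scope ring_scope.
From mathcomp.algebra_tactics Require Import ring lra.

Section helpers.
Context {R : realType} {n : nat}.
Local Notation V := 'rV[R]_n.

Lemma entry_le (u : V) i : `|u 0 i| <= `|u|.
Proof.
rewrite [leRHS]/Num.norm /= mx_normrE.
by apply: (le_bigmax _ _ (ord0, i)).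
Qed.

Lemma inner_le (u x : V) : `|inner u x| <= n%:R * (`|u| * `|x|).
Proof.
rewrite /inner; apply: (le_trans (ler_norm_sum _ _ _)).
apply: (@le_trans _ _ (\sum_(i < n) (`|u| * `|x|))).
  apply: ler_sum => i _; rewrite normrM.
  by apply: ler_pM => //; apply: entry_le.
by rewrite sumr_const card_ord mulr_natl.
Qed.

Lemma innerDr (u x y : V) : inner u (x + y) = inner u x + inner u y.
Proof. by rewrite /inner -big_split /=; apply: eq_bigr => i _; rewrite mxE mulrDr. Qed.

Lemma innerZr (u x : V) (a : R) : inner u (a *: x) = a * inner u x.
Proof. by rewrite /inner mulr_sumr; apply: eq_bigr => i _; rewrite mxE mulrCA. Qed.

Lemma innerZl (u x : V) (a : R) : inner (a *: u) x = a * inner u x.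
Proof. by rewrite /inner mulr_sumr; apply: eq_bigr => i _; rewrite mxE mulrA. Qed.

Lemma innerNl (u x : V) : inner (- u) x = - inner u x.
Proof. by rewrite -scaleN1r innerZl mulN1r. Qed.

Lemma inner_ge0 (u : V) : 0 <= inner u u.
Proof. by rewrite /inner; apply: sumr_ge0 => i _; rewrite -expr2 sqr_ge0. Qed.

Lemma inner_gt0 {u : V} : u != 0 -> 0 < inner u u.
Proof.
move=> u0; have [i ui] : exists i, u 0 i != 0.
  apply/existsP; apply: contraR u0 => /existsPn H; apply/eqP/rowP => i.
  by rewrite mxE; apply/eqP; move: (H i); rewrite negbK.
rewrite /inner (bigD1 i) //= ltr_pwDl ?sumr_ge0 // => [|j _].
  by rewrite -expr2 lt_neqAle sqr_ge0 andbT eq_sym sqrf_eq0.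
by rewrite -expr2 sqr_ge0.
Qed.

Lemma enormZ (u : V) (a : R) : enorm (a *: u) = `|a| * enorm u.
Proof.
rewrite /enorm innerZl innerZr mulrA -expr2 sqrtrM ?sqr_ge0 //.
by rewrite sqrtr_sqr.
Qed.

Lemma enormN (u : V) : enorm (- u) = enorm u.
Proof. by rewrite -scaleN1r enormZ normrN1 mul1r. Qed.

Lemma enorm_ge0 (u : V) : 0 <= enorm u.
Proof. exact: sqrtr_ge0. Qed.

Lemma slice (f : V -> \bar R) (alpha : R) (u x y : V) (l : R) :
  robustly_quasiconvex alpha f -> enorm u < alpha -> dom f x -> dom f y ->
  0 <= l <= 1 ->
  (f (l *: x + (1 - l) *: y)%R - (inner u (l *: x + (1 - l) *: y))%:E <=
    maxe (f x - (inner u x)%:E) (f y - (inner u y)%:E))%E.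
Proof.
move=> rq hu hx hy hl.
have H := rq (- u); rewrite enormN in H.
have := H hu x y l; rewrite /dom /= !innerNl !EFinN.
by apply=> //; apply: lte_add_pinfty => //; rewrite -EFinN ltry.
Qed.

Lemma finE {e : \bar R} {B : R} : e != -oo%E -> (e <= B%:E)%E -> e = (fine e)%:E.
Proof.
move=> h1 h2; rewrite fineK //; rewrite fin_numE h1 /=.
by apply: contraTN h2 => /eqP ->; rewrite leNgt ltry.
Qed.

Lemma growth (f : V -> \bar R) alpha y d (B : R) :
  (forall z, f z != -oo%E) -> robustly_quasiconvex alpha f -> 0 < alpha ->
  d != 0 -> dom f y -> (forall t, 0 < t -> (f (y + t *: d)%R <= B%:E)%E) ->
  forall t, 0 < t -> (f (y + t *: d)%R <= f y)%E.
Proof.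
move=> fNy rq a0 d0 yd hB t0 t00.
rewrite leNgt; apply/negP => hlt.
have fyE : f y = (fine (f y))%:E.
  rewrite fineK // fin_numE fNy /=; by rewrite -ltey.
set fy := fine (f y) in fyE.
have fzE := finE (fNy _) (hB _ t00).
set phi0 := fine (f (y + t0 *: d)) in fzE.
have gap0 : fy < phi0 by move: hlt; rewrite fyE fzE lte_fin.
have phiB : phi0 <= B by rewrite -lee_fin -fzE; exact: hB.
set D := inner d d.
have D0 : 0 < D := inner_gt0 d0.
set E := enorm d.
have E0 : 0 <= E := enorm_ge0 d.
set m := Num.min ((phi0 - fy) / (t0 * D)) (alpha / (E + 1)).
have m0 : 0 < m.
  by rewrite lt_min !divr_gt0 ?subr_gt0 ?mulr_gt0 //; lra.
have m1 : m <= (phi0 - fy) / (t0 * D) by rewrite ge_min lexx.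
have m2 : m <= alpha / (E + 1) by rewrite ge_min lexx orbT.
set s0 := m / 2.
have s00 : 0 < s0 by rewrite /s0; lra.
have s0a : s0 * (t0 * D) < phi0 - fy.
  rewrite -ltr_pdivlMr ?mulr_gt0 //; rewrite /s0; lra.
have s0E : enorm (s0 *: d) < alpha.
  rewrite enormZ gtr0_norm //.
  have : s0 < alpha / (E + 1) by rewrite /s0; lra.
  rewrite ltr_pdivlMr; last lra.
  move=> h; apply: le_lt_trans h; rewrite ler_pM2l // -/E; lra.
set K := B - phi0 + 1.
set T := t0 + K / (s0 * D).
have K0 : 0 < K by rewrite /K; lra.
have T0 : t0 < T by rewrite /T ltrDl divr_gt0 ?mulr_gt0.
have TK : s0 * (T * D) = s0 * (t0 * D) + K.
  rewrite /T; field; apply/andP; split; apply/lt0r_neq0 => //.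
have hT : 0 < T by lra.
set l := t0 / T.
have hl : 0 <= l <= 1.
  by rewrite /l divr_ge0 ?ler_pdivrMr ?mul1r; lra.
have zE : l *: (y + T *: d) + (1 - l) *: y = y + t0 *: d.
  rewrite scalerDr scalerBl scale1r scalerA [X in X = _]addrC addrA subrK.
  by rewrite /l divfK // gt_eqF.
have xd : dom f (y + T *: d).
  by rewrite /dom /=; apply: le_lt_trans (hB _ hT) _; apply: ltry.
have := @slice f alpha (s0 *: d) (y + T *: d) y l rq s0E xd yd hl.
rewrite zE.
have fxE := finE (fNy _) (hB _ hT).
set fx := fine (f (y + T *: d)) in fxE.
have fxB : fx <= B by rewrite -lee_fin -fxE; exact: hB.
rewrite fzE fxE fyE -!EFinB -EFin_max lee_fin le_max.
rewrite !innerZl !innerDr !innerZr -/D.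
case/orP => H.
all: rewrite !mulrDr in H; move: H TK s0a; rewrite /K; set a := s0 * inner d y; set b := s0 * (t0 * D); set c := s0 * (T * D); clearbody a b c; lra.
Qed.

End helpers.

Section helpers2.
Context {R : realType} {n : nat}.
Local Notation V := 'rV[R]_n.
Lemma eventually_inv {th : R} : 0 < th ->
  exists N : nat, forall k, (N <= k)%N -> k.+1%:R^-1 < th.
Proof. by move=> h; have [N _ HN] := near_infty_natSinv_lt (PosNum h); exists N. Qed.

Lemma enorm_small (u : V) (alpha : R) : 0 < alpha -> `|u| <= 1 ->
  n%:R * `|u| < alpha ^+ 2 -> enorm u < alpha.
Proof.
move=> a0 u1 h; rewrite /enorm -[alpha]gtr0_norm // -sqrtr_sqr ltr_sqrt ?exprn_gt0 //.
apply: le_lt_trans h; apply: le_trans (ler_norm _) _; apply: le_trans (inner_le u u) _.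
have := normr_ge0 u; have : 0 <= n%:R :> R by [].
move: u1; set a := `|u|; set b := n%:R; clearbody a b => *.
by apply: ler_wpM2l => //; rewrite -[X in _ <= X]mulr1; apply: ler_wpM2l.
Qed.

Lemma step1 (f : V -> \bar R) (X : set V) (alpha c : R) (xs us : nat -> V)
  (d y : V) (t : R) :
  (forall z, f z != -oo%E) -> lsc f -> robustly_quasiconvex alpha f -> 0 < alpha ->
  X `<=` dom f ->
  (forall k, [/\ `|us k| < k.+1%:R^-1, X (xs k), k.+1%:R < `|xs k| &
      (f (xs k) - (inner (us k) (xs k))%:E < c%:E)%E]) ->
  (forall N eps, 0 < eps -> exists k, (N <= k)%N /\ `|d - `|xs k|^-1 *: xs k| < eps) ->
  dom f y -> 0 < t -> (f (y + t *: d)%R <= (Num.max (fine (f y)) c)%:E)%E.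
Proof.
move=> fNy hlsc rq a0 XD Hk Hc yd t0.
have fyE : f y = (fine (f y))%:E by rewrite fineK // fin_numE fNy /= -ltey.
set fy := fine (f y) in fyE *.
set M := Num.max fy c.
have Mfy : fy <= M by rewrite le_max lexx.
have Mc : c <= M by rewrite le_max lexx orbT.
set z0 := y + t *: d.
rewrite leNgt; apply/negP => hz.
have [a Ma af] : exists2 a, M < a & (a%:E < f z0)%E.
  move: hz (fNy z0); case: (f z0) => [r| |] //.
  - rewrite lte_fin => h _; exists ((M + r) / 2); [lra | rewrite lte_fin; lra].
  - by move=> _ _; exists (M + 1); [lra | rewrite ltry].
have [rho rho0 Hrho] : exists2 rho : R, 0 < rho &
    forall z, `|z0 - z| < rho -> (a%:E < f z)%E.
  have := hlsc z0 a af; move/nbhs_normP => [rho rho0 H].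
  by exists rho => // z hz; apply: H.
set eta := a - M.
have eta0 : 0 < eta by rewrite /eta; lra.
set Cz := `|y| + `|z0| + rho.
have Cz0 : 0 <= Cz by rewrite /Cz; have := normr_ge0 y; have := normr_ge0 z0; lra.
have n0 : 0 <= n%:R :> R by [].
set th := Num.min (Num.min 1 (alpha ^+ 2 / (n%:R + 1)))
  (Num.min (eta / ((n%:R + 1) * (Cz + 1)))
    (Num.min (rho / (2 * (t * `|y| + 1))) (1 / (t + 1)))).
have ny0 := normr_ge0 y.
have th0 : 0 < th.
  rewrite /th !lt_min ltr01 /= !divr_gt0 ?exprn_gt0 ?mulr_gt0 //; try lra.
  by have := mulr_ge0 (ltW t0) ny0; lra.
have [N HN] := eventually_inv th0.
have [k [Nk hk]] := Hc N (rho / (2 * t)) (divr_gt0 rho0 (mulr_gt0 (ltr0n R 2) t0 : 0 < 2 * t)).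
have e_th := HN k Nk.
set e := k.+1%:R^-1 in e_th.
have e0 : 0 < e by rewrite /e invr_gt0 ltr0n.
have h1 : e < 1 by apply: lt_le_trans e_th _; rewrite /th !ge_min lexx.
have h2 : e < alpha ^+ 2 / (n%:R + 1).
  by apply: lt_le_trans e_th _; rewrite /th !ge_min lexx /= ?orbT.
have h3 : e < eta / ((n%:R + 1) * (Cz + 1)).
  by apply: lt_le_trans e_th _; rewrite /th !ge_min lexx /= ?orbT.
have h4 : e < rho / (2 * (t * `|y| + 1)).
  by apply: lt_le_trans e_th _; rewrite /th !ge_min lexx /= ?orbT.
have h5 : e < 1 / (t + 1).
  by apply: lt_le_trans e_th _; rewrite /th !ge_min lexx /= ?orbT.
rewrite ltr_pdivlMr in h2; last by lra.
rewrite ltr_pdivlMr in h3; last by apply: mulr_gt0; lra.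
rewrite ltr_pdivlMr in h4; last by have := mulr_ge0 (ltW t0) ny0; lra.
rewrite ltr_pdivlMr in h5; last by lra.
case: (Hk k) => hu hX hx hc.
set u := us k in hu hc *; set x := xs k in hX hx hc hk *.
set nx := `|x| in hx hk *.
set K1 := k.+1%:R in hx.
have K10 : 0 < K1 by rewrite /K1 ltr0n.
have eK : e * K1 = 1 by rewrite /e /K1 mulVf // gt_eqF.
have nx0 : 0 < nx by lra.
set l := t / nx.
have lnx : l * nx = t by rewrite /l divfK // gt_eqF.
have lte : l < t * e.
  have : 0 < nx - K1 by rewrite subr_gt0.
  move=> hx'; have := mulr_gt0 (mulr_gt0 t0 e0) hx'; clearbody l e K1 nx; nra.
have l0 : 0 <= l by rewrite /l divr_ge0 // ltW.
have hl : 0 <= l <= 1 by apply/andP; split => //; nra.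
set w := nx^-1 *: x in hk.
set z := l *: x + (1 - l) *: y.
have zz0 : z0 - z = t *: (d - w) + l *: y.
  apply/rowP => i; rewrite /z0 /z /w /l !mxE; ring.
have hz0z : `|z0 - z| < rho.
  rewrite zz0; apply: le_lt_trans (ler_normD _ _) _.
  have -> : `|l *: y| = l * `|y| by rewrite normrZ (ger0_norm l0).
  rewrite normrZ (gtr0_norm t0).
  have : t * `|d - w| < rho / 2.
    by move: hk; rewrite ltr_pdivlMr ?mulr_gt0 // => hk; lra.
  have : l * `|y| <= t * e * `|y| by apply: ler_wpM2r => //; apply: ltW.
  clearbody e l; nra.
have fz := Hrho _ hz0z.
have hzn : `|z| <= `|z0| + rho.
  have -> : z = z0 - (z0 - z) by rewrite opprB addrCA subrr addr0.
  by apply: le_trans (ler_normB _ _) _; rewrite lerD2l ltW.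
have hue : `|u| <= e by apply: ltW.
have hen : enorm u < alpha.
  apply: enorm_small => //; first by lra.
  apply: le_lt_trans h2; have := normr_ge0 u; clearbody e; nra.
have := @slice _ _ f alpha u x y l rq hen (XD _ hX) yd hl.
rewrite -/z fyE.
have F1 : inner u z <= n%:R * (e * (`|z0| + rho)).
  apply: le_trans (ler_norm _) _; apply: le_trans (inner_le _ _) _.
  by apply: ler_wpM2l => //; apply: ler_pM.
have F2 : - inner u y <= n%:R * (e * `|y|).
  have := ler_norm (- inner u y); rewrite normrN => HH; apply: le_trans HH _.
  apply: le_trans (inner_le _ _) _.
  by apply: ler_wpM2l => //; apply: ler_wpM2r.
have F3 : n%:R * (e * (`|z0| + rho)) + n%:R * (e * `|y|) < eta.
  apply: le_lt_trans h3; rewrite /Cz.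
  have := normr_ge0 z0; clearbody e; nra.
have L : ((a - inner u z)%:E < f z - (inner u z)%:E)%E.
  by rewrite EFinB lteD2rE ?fin_numN.
have P2ge : 0 <= n%:R * (e * `|y|) by rewrite !mulr_ge0 // ltW.
move: P2ge => P2ge H; have := lt_le_trans L H; rewrite lt_max => /orP[|].
  move=> H2; have := lt_trans H2 hc; rewrite lte_fin.
  move: F1 F2 F3 P2ge; rewrite /eta.
  set P1 := n%:R * _; set P2 := n%:R * _; clearbody P1 P2; lra.
rewrite -EFinB lte_fin.
move: F1 F2 F3 P2ge; rewrite /eta.
set P1 := n%:R * _; set P2 := n%:R * _; clearbody P1 P2; lra.
Qed.

End helpers2.

Section helpers3.
Context {R : realType} {n : nat}.
Local Notation V := 'rV[R]_n.

Lemma coercive (f : V -> \bar R) (X : set V) (alpha c : R) :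
  (forall z, f z != -oo%E) -> lsc f -> robustly_quasiconvex alpha f -> 0 < alpha ->
  X `<=` dom f -> asymp_cone X `&` Kq f = [set 0] ->
  exists N : nat, forall u x, `|u| < N.+1%:R^-1 -> X x -> N.+1%:R < `|x| ->
    (c%:E <= f x - (inner u x)%:E)%E.
Proof.
move=> fNy hlsc rq a0 XD HK.
apply: contrapT => Hn.
have H k : exists p : V * V, [/\ `|p.1| < k.+1%:R^-1, X p.2, k.+1%:R < `|p.2| &
    (f p.2 - (inner p.1 p.2)%:E < c%:E)%E].
  apply: contrapT => Hk; apply: Hn; exists k => u x hu hX hx.
  by rewrite leNgt; apply/negP => hlt; apply: Hk; exists (u, x).
have [g Hg] := choice H.
pose xs k := (g k).2; pose us k := (g k).1.
have Hk : forall k, [/\ `|us k| < k.+1%:R^-1, X (xs k), k.+1%:R < `|xs k| &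
      (f (xs k) - (inner (us k) (xs k))%:E < c%:E)%E] := Hg.
pose w k := `|xs k|^-1 *: xs k.
have w1 k : `|w k| = 1.
  have : 0 < `|xs k|.
    by case: (Hk k) => _ _ h _; apply: lt_trans h; rewrite ltr0n.
  by move=> h; rewrite /w normrZ normfV normr_id mulVf // gt_eqF.
have cA : compact (closed_ball (0 : V) 1).
  apply: bounded_closed_compact; last exact: closed_ball_closed.
  exists 1; split; first exact: num_real.
  move=> M hM x /=; rewrite closed_ballE // /closed_ball_ /= sub0r normrN => hx.
  by apply: le_trans hx _; apply: ltW.
have [d [Ad cd]] : (closed_ball (0 : V) 1 `&` cluster (w @ \oo)) !=set0.
  apply: cA.
  exists 0%N => // k _ /=.
  by rewrite closed_ballE // /closed_ball_ /= sub0r normrN w1.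
have ext N eps : 0 < eps -> exists k, (N <= k)%N /\ `|d - w k| < eps.
  move=> e0; have [] := cd (w @` [set k | (N <= k)%N]) (ball d eps).
  - by exists N => // k /= hk; exists k.
  - exact: nbhsx_ballx.
  move=> _ [[k hk <-] hb]; exists k; split => //.
  by move: hb; rewrite -ball_normE /ball_ /=.
have dn0 : d != 0.
  apply/eqP => d0; have [k [_ hk]] := ext 0%N (1/2) (ltac:(lra) : 0 < 1/2 :> R).
  by move: hk; rewrite d0 sub0r normrN w1; lra.
have dA : asymp_cone X d.
  have sel k : exists j, (k <= j)%N /\ `|d - w j| < k.+1%:R^-1.
    by apply: ext; rewrite invr_gt0 ltr0n.
  have [js Hjs] := choice sel.
  exists (fun k => `|xs (js k)|), (fun k => xs (js k)); split.
    apply/cvgryPge => A.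
    apply: filterS (nbhs_infty_ger A) => k hA.
    apply: (le_trans hA); case: (Hk (js k)) => _ _ h _.
    apply: ltW; apply: le_lt_trans h.
    by rewrite ler_nat; apply: leqW; case: (Hjs k).
  split; first by move=> k; case: (Hk (js k)).
  apply/cvgrPdist_lt => eps e0.
  apply: filterS (near_infty_natSinv_lt (PosNum e0)) => k hk.
  by apply: lt_trans hk; case: (Hjs k).
have dK : Kq f d.
  rewrite /Kq /q_asymp /=; apply/ereal_supP => _ [y yd [t t0 <-]].
  have := @growth _ _ f alpha y d (Num.max (fine (f y)) c) fNy rq a0 dn0 yd
    (fun s s0 => @step1 _ _ f X alpha c xs us d y s fNy hlsc rq a0 XD Hk ext yd s0)
    t t0.
  move=> hle; apply: mule_le0_ge0; first by rewrite sube_le0.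
  by rewrite lee_fin invr_ge0 ltW.
have : (asymp_cone X `&` Kq f) d by split.
by rewrite HK => /= /eqP; apply/negP.
Qed.

End helpers3.

Section helpers4.
Context {R : realType} {n : nat}.
Local Notation V := 'rV[R]_n.

Lemma inner0l (x : V) : inner 0 x = 0.
Proof. by rewrite /inner big1 // => i _; rewrite mxE mul0r. Qed.

Lemma near0 (P : V -> Prop) :
  (exists2 r : R, 0 < r & forall u : V, `|u| < r -> P u) -> \forall u \near (0 : V), P u.
Proof.
move=> [r r0 H]; apply/nbhs_normP; exists r => // u /=.
by rewrite sub0r normrN; exact: H.
Qed.

Lemma inner_up (u x : V) : inner u x <= n%:R * (`|u| * `|x|).
Proof. exact: le_trans (ler_norm _) (inner_le _ _). Qed.

Lemma inner_lo (u x : V) : - inner u x <= n%:R * (`|u| * `|x|).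
Proof.
have := ler_norm (- inner u x); rewrite normrN => h.
exact: le_trans h (inner_le _ _).
Qed.

Lemma mu_ub (f : V -> \bar R) (X : set V) {u x : V} :
  X x -> (mu f X u <= f x - (inner u x)%:E)%E.
Proof. by move=> hx; apply: ereal_inf_lbound; exists x. Qed.

Lemma upper_near (f : V -> \bar R) (X : set V) (x1 : V) (b eps : R) :
  X x1 -> (f x1 <= b%:E)%E -> 0 < eps ->
  exists2 r : R, 0 < r & forall u : V, `|u| < r -> (mu f X u <= (b + eps)%:E)%E.
Proof.
move=> hX fb e0.
have hx0 := normr_ge0 x1.
have n0 : 0 <= n%:R :> R by [].
exists (eps / ((n%:R + 1) * (`|x1| + 1))).
  by apply: divr_gt0 => //; apply: mulr_gt0; lra.
move=> u hu; apply: le_trans (mu_ub f X hX) _.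
have hu' : `|u| * ((n%:R + 1) * (`|x1| + 1)) < eps.
  by move: hu; rewrite ltr_pdivlMr //; apply: mulr_gt0; lra.
have hb : (- inner u x1 <= eps).
  move: hu' (normr_ge0 x1) n0 (inner_lo u x1) (normr_ge0 u).
  set a := `|u|; set iu := inner u x1; set nx := `|x1|; set m := n%:R.
  clearbody a iu nx m => hu' hnx hm hi ha; nra.
apply: le_trans (leeD fb (lexx _)) _.
by rewrite -EFinB lee_fin; lra.
Qed.

End helpers4.

Theorem mainTheorem14 (R : realType) (n : nat) (f : 'rV[R]_n -> \bar R)
  (X : set 'rV[R]_n) (alpha : R) :
  proper_fun f -> lsc f ->
  X !=set0 -> closed X -> unbounded (dom f `&` X) ->
  convex_set_ X ->
  0 < alpha -> robustly_quasiconvex alpha f ->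
  X `<=` dom f ->
  asymp_cone X `&` Kq f = [set 0] ->
  mu f X u @[u --> (0 : 'rV[R]_n)] --> mu f X 0.
Proof.
move=> [fNy _] hlsc [x0 X0] _ _ _ a0 rq XD HK.
have fNy' : forall z, f z != -oo%E by move=> z; apply/eqP.
have n0 : 0 <= n%:R :> R by [].
have fin_of (x : 'rV[R]_n) : X x -> f x = (fine (f x))%:E.
  move=> hx; rewrite fineK // fin_numE fNy' /= -ltey; exact: XD.
have mu0x (x : 'rV[R]_n) : X x -> (mu f X 0 <= f x)%E.
  by move=> hx; have := mu_ub f X (u:=0) hx; rewrite inner0l sube0.
case E0 : (mu f X 0) => [m| |].
-
  have key eps : 0 < eps -> exists2 r : R, 0 < r & forall u : 'rV[R]_n, `|u| < r ->
      ((m - eps)%:E <= mu f X u)%E /\ (mu f X u <= (m + eps)%:E)%E.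
    move=> e0.
    have [x1 hx1 fx1] : exists2 x1, X x1 & (f x1 <= (m + eps / 2)%:E)%E.
      have : (mu f X 0 < (m + eps / 2)%:E)%E by rewrite E0 lte_fin; lra.
      case/ereal_inf_ltP => _ [x1 hx1 <-]; rewrite inner0l sube0 => h.
      by exists x1 => //; apply: ltW.
    have [r1 r10 Hr1] := @upper_near _ _ f X x1 _ _ hx1 fx1 (ltac:(lra) : 0 < eps / 2).
    have [N HN] := @coercive _ _ f X alpha (m - eps) fNy' hlsc rq a0 XD HK.
    set K := N.+1%:R : R.
    have K0 : 0 < K by rewrite /K ltr0n.
    exists (Num.min r1 (Num.min (N.+1%:R^-1) (eps / ((n%:R + 1) * K)))).
      rewrite !lt_min r10 invr_gt0 ltr0n /=; apply: divr_gt0 => //.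
      by apply: mulr_gt0 => //; lra.
    move=> u; rewrite !lt_min => /andP[hr1 /andP[hN he]]; split; last first.
      by have := Hr1 u hr1; rewrite (_ : m + eps / 2 + eps / 2 = m + eps) //; lra.
    apply/ereal_infP => _ [x hx <-].
    have [hxK|hxK] := ltP K `|x|; first exact: HN.
    have := mu0x x hx; rewrite E0 (fin_of x hx) -EFinB !lee_fin => hm.
    have := inner_up u x; have := normr_ge0 u; have := normr_ge0 x.
    move: he; rewrite ltr_pdivlMr; last by apply: mulr_gt0 => //; lra.
    move: hxK n0 (mulr_ge0 n0 (normr_ge0 u)) K0.
    set a := `|u|; set b := `|x|; set iu := inner u x; set nn := n%:R.
    clearbody a b iu nn K => *; nra.
  apply/(fine_cvgP (F := nbhs (0 : 'rV[R]_n))); split.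
    apply: near0; have [r r0 H] := key 1 ltr01; exists r => // u /H [h1 h2].
    by rewrite fin_numElt (lt_le_trans (ltNyr _) h1) (le_lt_trans h2 (ltry _)).
  apply/cvgrPdist_lt => eps e0.
  apply: near0; have [r r0 H] := key (eps / 2) (ltac:(lra) : 0 < eps / 2).
  exists r => // u /H [h1 h2] /=.
  have fE : mu f X u = (fine (mu f X u))%:E.
    by rewrite fineK // fin_numElt (lt_le_trans (ltNyr _) h1) (le_lt_trans h2 (ltry _)).
  move: h1 h2; rewrite fE !lee_fin => h1 h2.
  rewrite ltr_distlC; apply/andP; split; lra.
-
  by have := mu0x x0 X0; rewrite E0 (fin_of x0 X0).
-
  apply/(cvgeNyPle (F := nbhs (0 : 'rV[R]_n))) => A.
  have [x1 hx1 fx1] : exists2 x1, X x1 & (f x1 <= (A - 1)%:E)%E.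
    have : (mu f X 0 < (A - 1)%:E)%E by rewrite E0 ltNyr.
    case/ereal_inf_ltP => _ [x1 hx1 <-]; rewrite inner0l sube0 => h.
    by exists x1 => //; apply: ltW.
  have [r1 r10 Hr1] := @upper_near _ _ f X x1 _ _ hx1 fx1 ltr01.
  apply: near0; exists r1 => // u hu.
  by have := Hr1 u hu; rewrite subrK.
Qed.
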